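(* Let $\Lambda=K\mathcal{Q}/I$ be a finite-dimensional algebra over a field $K$ as in the context, let $A\geqslant1$ and let $\tilde{\Lambda}=\tilde{\Lambda}_A$ be its stretched algebra. Let $w$ be a vertex of $\tilde{\mathcal{Q}}_A$ not in $\mathcal{Q}_0$, let $v=\mathfrak{o}(\tilde{p}_w)$ and $v'=\mathfrak{t}(\tilde{q}_w)$, and let $\tilde\lambda\in\tilde{\Lambda}$. Then: (1) if $0\neq\tilde\lambda v\in\tilde{\Lambda}v$, then $\tilde\lambda\tilde{p}_w\neq0$ in $\tilde{\Lambda}$; (2) if $0\neq v'\tilde\lambda\in v'\tilde{\Lambda}$, then $\tilde{q}_w\tilde\lambda\neq0$ in $\tilde{\Lambda}$.
   Context: Conventions: $\mathcal{Q}$ is a finite quiver with vertex set $\mathcal{Q}_0$; $\mathfrak{o}(\alpha)$, $\mathfrak{t}(\alpha)$ denote start and end of an arrow or path; paths are written left to right. An element $x\in K\mathcal{Q}$ is uniform if $x=vx=xv'$ for vertices $v,v'$. $\Lambda=K\mathcal{Q}/I$ is finite-dimensional with $I$ an admissible ideal generated by a minimal set $\{g^2_1,\dots,g^2_m\}$ of uniform elements. Stretched algebra: for $A\geqslant1$, the quiver $\tilde{\mathcal{Q}}_A$ has all vertices of $\mathcal{Q}$ plus, for each arrow $\alpha$ of $\mathcal{Q}$, new vertices $w_1,\dots,w_{A-1}$; each arrow $\alpha$ is replaced by arrows $\alpha_1,\dots,\alpha_A$ with $\mathfrak{o}(\alpha_1)=\mathfrak{o}(\alpha)$, $\mathfrak{t}(\alpha_j)=\mathfrak{o}(\alpha_{j+1})=w_j$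 ($1\le j\le A-1$), $\mathfrak{t}(\alpha_A)=\mathfrak{t}(\alpha)$, and the only arrows incident with $w_j$ are $\alpha_j,\alpha_{j+1}$. $\theta^*:K\mathcal{Q}\to K\tilde{\mathcal{Q}}_A$ is the algebra homomorphism fixing vertices and sending $\alpha\mapsto\alpha_1\cdots\alpha_A$; $\tilde{I}_A$ is the ideal generated by $\theta^*(g^2_1),\dots,\theta^*(g^2_m)$; $\tilde{\Lambda}_A=K\tilde{\mathcal{Q}}_A/\tilde{I}_A$. For a new vertex $w=w_i$ on the path replacing the arrow $\alpha$, $\tilde{p}_w=\alpha_1\cdots\alpha_i$ (the unique shortest path from a vertex of $\mathcal{Q}_0$ to $w$) and $\tilde{q}_w=\alpha_{i+1}\cdots\alpha_A$ (the unique shortest path from $w$ to a vertex of $\mathcal{Q}_0$), viewed in $\tilde{\Lambda}$; thus $\mathfrak{o}(\tilde{p}_w)=\mathfrak{o}(\alpha)$, $\mathfrak{t}(\tilde{q}_w)=\mathfrak{t}(\alpha)$. *)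

(* Defs.v *)
(* Concrete model of path algebras K Q and of ideal
   membership; elements of K Q are represented by finite formal linear
   combinations of (raw) paths, and equality in K Q is equality of all
   coefficients. *)
From HB Require Import structures.
From mathcomp Require Import all_boot all_order all_algebra.
Set Implicit Arguments. Unset Strict Implicit. Unset Printing Implicit Defensive.
Import GRing.Theory.
Local Open Scope ring_scope.

Section PathAlgebra.
Variables (K : fieldType) (V Arr : eqType) (src tgt : Arr -> V).

(* a raw path: starting vertex and the list of its arrows (left to right) *)
Definition qpath := (V * seq Arr)%type.

Fixpoint validf (v : V) (l : seq Arr) : bool :=
  if l is a :: l' then (src a == v) && validf (tgt a) l' else true.
Fixpoint endf (v : V) (l : seq Arr) : V :=
  if l is a :: l' then endf (tgt a) l' else v.

Definition pvalid (p : qpath) := validf p.1 p.2.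
Definition pend (p : qpath) := endf p.1 p.2.
Definition pstart (p : qpath) := p.1.
Definition composable (p q : qpath) :=
  [&& pvalid p, pvalid q & pend p == q.1].
Definition pcat (p q : qpath) : qpath := (p.1, p.2 ++ q.2).

Definition elm := seq (K * qpath).
Definition coef (x : elm) (p : qpath) : K :=
  \sum_(e <- x | (e.2 == p) && pvalid e.2) e.1.
Definition eqe (x y : elm) := forall p, coef x p = coef y p.
Definition adde (x y : elm) : elm := x ++ y.
Definition scale (c : K) (x : elm) : elm := [seq (c * e.1, e.2) | e <- x].
Definition mule (x y : elm) : elm :=
  [seq (e.1 * f.1, pcat e.2 f.2) | e <- x, f <- [seq f <- y | composable e.2 f.2]].
Definition pel (p : qpath) : elm := [:: (1, p)].
Definition vtx (v : V) : elm := pel (v, [::]).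

Definition uniform (x : elm) :=
  exists v v' : V, eqe x (mule (vtx v) x) /\ eqe x (mule x (vtx v')).

(* membership in the two-sided ideal generated by gs: K-span of u g w,
   u, w paths, g in gs *)
Definition in_ideal (gs : seq elm) (x : elm) :=
  exists r : seq (K * qpath * nat * qpath),
    eqe x (flatten [seq scale t.1.1.1
                      (mule (mule (pel t.1.1.2) (nth [::] gs t.1.2)) (pel t.2))
                   | t <- r]).

(* x lies in J^n, J the arrow ideal *)
Definition in_Jpow (n : nat) (x : elm) :=
  forall p, pvalid p -> (size p.2 < n)%N -> coef x p = 0.

(* the ideal generated by gs is admissible: J^N <= I <= J^2 *)
Definition admissible (gs : seq elm) :=
  (forall g, g \in gs -> in_Jpow 2 g) /\
  exists N : nat, forall p, pvalid p -> (N <= size p.2)%N -> in_ideal gs (pel p).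

Definition minimal_gens (gs : seq elm) :=
  forall i, (i < size gs)%N ->
    ~ in_ideal [seq nth [::] gs j | j <- iota 0 (size gs) & j != i] (nth [::] gs i).

End PathAlgebra.

Section Stretch.
Variables (V Arr : eqType) (src tgt : Arr -> V) (A : nat).

(* new vertices w_i on the arrow alpha, 1 <= i <= A-1, are (alpha, i) *)
Definition newv := {x : (Arr * nat)%type | (0 < x.2 < A)%N}.
Definition svert := (V + newv)%type.
(* arrow (alpha, j) with j : 'I_A stands for alpha_(j+1) *)
Definition sarr := (Arr * 'I_A)%type.

Definition ssrc (b : sarr) : svert :=
  match insub (b.1, nat_of_ord b.2) : option newv with
  | Some w => inr w | None => inl (src b.1) end.
Definition stgt (b : sarr) : svert :=
  match insub (b.1, (nat_of_ord b.2).+1) : option newv with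
  | Some w => inr w | None => inl (tgt b.1) end.

Definition stretch_arrow (a : Arr) : seq sarr := [seq (a, j) | j <- enum 'I_A].

Definition theta (K : fieldType) (x : elm K V Arr) : elm K svert sarr :=
  [seq (e.1, (inl e.2.1, flatten [seq stretch_arrow a | a <- e.2.2]) : qpath svert sarr)
  | e <- x].

(* ~p_w = alpha_1 ... alpha_i and ~q_w = alpha_(i+1) ... alpha_A *)
Definition ptilde (w : newv) : qpath svert sarr :=
  (inl (src (val w).1), [seq ((val w).1, j) | j : 'I_A <- [seq j <- enum 'I_A | (nat_of_ord j < (val w).2)%N]]).
Definition qtilde (w : newv) : qpath svert sarr :=
  (inr w, [seq ((val w).1, j) | j : 'I_A <- [seq j <- enum 'I_A | ((val w).2 <= nat_of_ord j)%N]]).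

End Stretch.

(* Main.v *)
Require Import Defs.
From mathcomp Require Import all_boot all_order all_algebra.
Set Implicit Arguments. Unset Strict Implicit. Unset Printing Implicit Defensive.
Import GRing.Theory.
Local Open Scope ring_scope.

Section Gen.
Variables (K : fieldType) (V Arr : eqType) (src tgt : Arr -> V).

Lemma validf_cat s l1 l2 : validf src tgt s (l1 ++ l2) =
  validf src tgt s l1 && validf src tgt (endf tgt s l1) l2.
Proof. by elim: l1 s => [|a l IH] s //=; rewrite IH andbA. Qed.

Lemma endf_cat s l1 l2 : endf tgt s (l1 ++ l2) = endf tgt (endf tgt s l1) l2.
Proof. by elim: l1 s => [|a l IH] s //=. Qed.

Lemma coef_cat (x y : elm K V Arr) p : coef src tgt (x ++ y) p = coef src tgt x p + coef src tgt y p.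
Proof. by rewrite /coef big_cat. Qed.

Lemma coef_nil p : coef src tgt ([::] : elm K V Arr) p = 0.
Proof. by rewrite /coef big_nil. Qed.

Lemma coef_scale0 (y : elm K V Arr) p : coef src tgt (scale 0 y) p = 0.
Proof. rewrite /coef /scale big_map big1 // => e _ /=; by rewrite mul0r. Qed.

Lemma eqe_flatten (L1 L2 : seq (elm K V Arr)) : size L1 = size L2 ->
  (forall k, (k < size L1)%N -> eqe src tgt (nth [::] L1 k) (nth [::] L2 k)) ->
  eqe src tgt (flatten L1) (flatten L2).
Proof.
elim: L1 L2 => [|a L IH] [|b L'] //= [] Hs H p.
rewrite !coef_cat (H 0%N) //; congr (_ + _); apply: IH => // k Hk.
exact: (H k.+1).
Qed.

Lemma eqe_trans x y z : eqe src tgt x y -> eqe src tgt y z -> eqe src tgt (x : elm K V Arr) z.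
Proof. by move=> H1 H2 p; rewrite H1 H2. Qed.

Lemma flatten_if (T U : Type) (b : pred T) (h : T -> U) s :
  flatten [seq (if b x then [:: h x] else [::]) | x <- s] = [seq h x | x <- s & b x].
Proof. by elim: s => [|x s IH] //=; case: (b x) => /=; rewrite IH. Qed.

Lemma mulpel_eq (x : elm K V Arr) p : mule src tgt x (pel K p) =
  [seq (e.1 * 1, pcat e.2 p) | e <- x & composable src tgt e.2 p].
Proof.
rewrite /mule /pel -flatten_if; congr flatten; apply: eq_map => e /=.
by case: ifP.
Qed.

Lemma pelmul_eq (y : elm K V Arr) p : mule src tgt (pel K p) y =
  [seq (1 * f.1, pcat p f.2) | f <- y & composable src tgt p f.2].
Proof. by rewrite /mule /pel /= cats0. Qed.


Lemma term_eq (G : elm K V Arr) u w2 :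
  mule src tgt (mule src tgt (pel K u) G) (pel K w2) =
  [seq (1 * f.1 * 1, pcat (pcat u f.2) w2) | f <- G &
     composable src tgt u f.2 && composable src tgt (pcat u f.2) w2].
Proof.
rewrite mulpel_eq pelmul_eq; elim: G => [|f G IH] //=.
by case: (composable src tgt u f.2) => //=; case: (composable _ _ _ w2) => /=; rewrite IH.
Qed.

Lemma pcat_valid (a b : qpath V Arr) : composable src tgt a b ->
  pvalid src tgt (pcat a b) /\ pend tgt (pcat a b) = pend tgt b.
Proof.
case/and3P; rewrite /pvalid /pend => Ha Hb /eqP He; rewrite /pcat /= validf_cat endf_cat He.
by rewrite Ha.
Qed.

End Gen.

Lemma eq_catr (T : eqType) (l1 l2 p : seq T) : (l1 ++ p == l2 ++ p) = (l1 == l2).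
Proof.
apply/eqP/eqP => [H|->//].
have Hs: size l1 = size l2 by move/(congr1 size): H; rewrite !size_cat => /addIn.
by move/eqP: H; rewrite eqseq_cat // eqxx andbT => /eqP.
Qed.
Section Str.
Variables (K : fieldType) (V Arr : eqType) (src tgt : Arr -> V) (A : nat).
Local Notation S := (svert V Arr A).
Local Notation B := (sarr Arr A).
Local Notation ss := (@ssrc V Arr src A).
Local Notation sg := (@stgt V Arr tgt A).
Local Notation vf := (validf ss sg).
Local Notation ef := (endf sg).

Definition nod (a : Arr) (j : nat) : S :=
  match insub (a, j) : option (newv Arr A) with
  | Some w => inr w | None => if j == 0%N then inl (src a) else inl (tgt a) end.

Lemma ssrc_nod (b : B) : ss b = nod b.1 b.2.
Proof.
rewrite /ssrc /nod; case: insubP => [//|] /=.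
by rewrite ltn_ord andbT -eqn0Ngt => ->.
Qed.

Lemma stgt_nod (b : B) : sg b = nod b.1 b.2.+1.
Proof. by rewrite /stgt /nod; case: insubP. Qed.

Lemma nod_inr a j w0 : nod a j = inr w0 -> val w0 = (a, j).
Proof.
rewrite /nod; case: insubP => [u _ Hu [<-] //|_]; by case: ifP.
Qed.

Lemma nod_val (w : newv Arr A) : nod (val w).1 (val w).2 = inr w.
Proof. by rewrite /nod -surjective_pairing valK. Qed.

Lemma nod0 a : nod a 0 = inl (src a).
Proof. by rewrite /nod insubF. Qed.

Lemma nodA a : (0 < A)%N -> nod a A = inl (tgt a).
Proof. by move=> HA; rewrite /nod insubF /= ?ltnn ?andbF //; case: A HA. Qed.

Lemma nod_mid a j : (0 < j < A)%N -> exists w0, nod a j = inr w0.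
Proof. by move=> H; rewrite /nod insubT /=; eexists. Qed.

Definition fb (b : B) : (Arr * nat)%type := (b.1, nat_of_ord b.2).
Lemma fb_inj : injective fb.
Proof. by move=> [a1 j1] [a2 j2] [-> /val_inj ->]. Qed.

Lemma fwd_valid a (js : seq 'I_A) j : map val js = iota j (size js) ->
  vf (nod a j) [seq (a, t) | t <- js] && (ef (nod a j) [seq (a, t) | t <- js] == nod a (j + size js)).
Proof.
elim: js j => [|t js IH] j /=; first by rewrite addn0.
case=> Ht Hm; rewrite ssrc_nod stgt_nod /= Ht eqxx /=.
rewrite -addSnnS; exact: IH.
Qed.

Lemma fwd_end a (js : seq 'I_A) j s : map val js = iota j (size js) -> js != [::] ->
  ef s [seq (a, t) | t <- js] = nod a (j + size js).
Proof.
case: js => [|t js] //= [Ht Hm] _; rewrite stgt_nod /= Ht.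
by have /andP[_ /eqP ->] := fwd_valid a Hm; rewrite -addSnnS.
Qed.

Lemma fwd_start a (js : seq 'I_A) j s : map val js = iota j (size js) -> js != [::] ->
  vf s [seq (a, t) | t <- js] -> s = nod a j.
Proof.
case: js => [|t js] //= [Ht Hm] _; rewrite ssrc_nod /= Ht; by case/andP => /eqP.
Qed.

Lemma stretch_end a s : (0 < A)%N -> ef s (stretch_arrow A a) = inl (tgt a).
Proof.
move=> HA; rewrite /stretch_arrow (@fwd_end a (enum 'I_A) 0 s) ?size_enum_ord ?nodA //.
  by rewrite val_enum_ord ?size_enum_ord.
by case: A HA => // n _; rewrite -size_eq0 size_enum_ord.
Qed.

Lemma theta_end v0 l0 : (0 < A)%N -> exists v1,
  ef (inl v0) (flatten [seq stretch_arrow A a | a <- l0]) = inl v1.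
Proof.
move=> HA; elim: l0 v0 => [|a l IH] v0 /=; first by exists v0.
by rewrite endf_cat stretch_end //; apply: IH.
Qed.


Lemma back a l : forall k s, (k < A)%N -> vf s l -> ef s l = nod a k ->
  ((k <= size l)%N -> map fb (drop (size l - k) l) = [seq (a, j) | j <- iota 0 k]) /\
  ((size l < k)%N -> s = nod a (k - size l)).
Proof.
elim/last_ind: l => [|l b IH] k s Hk.
  move=> _ /= Hs; split => [|_]; last by rewrite subn0.
  by rewrite leqn0 => /eqP ->.
rewrite -cats1 validf_cat endf_cat /= andbT => /andP[Hv /eqP Hb] He.
case: k Hk He => [|k] Hk He.
  by split => // _; rewrite subn0 drop_size.
have [w0 Hw0] := nod_mid a (j := k.+1) Hk.
rewrite stgt_nod Hw0 in He.
have := nod_inr He; rewrite (nod_inr Hw0) => -[H1 H2].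
rewrite ssrc_nod -H1 -H2 in Hb.
have [IH1 IH2] := IH k s (ltnW Hk) Hv (esym Hb).
rewrite size_cat /= addn1 subSS ltnS; split => Hks.
  rewrite cats1 drop_rcons ?leq_subr // map_rcons IH1 //.
  apply: (@etrans _ _ [seq (a, j) | j <- iota 0 k ++ [:: k]]); last by rewrite -[[:: k]]/(iota (0 + k) 1) -iotaD addn1.
  by rewrite map_cat cats1 /fb -H1 -H2.
by rewrite IH2.
Qed.

Lemma fwd a l : forall k, (0 < k < A)%N -> vf (nod a k) l ->
  map fb (take (A - k) l) = [seq (a, j) | j <- iota k (size (take (A - k) l))] /\
  ((size l < A - k)%N -> ef (nod a k) l = nod a (k + size l)).
Proof.
elim: l => [|b l IH] k Hk /=; first by rewrite addn0.
case/andP => /eqP Hb Hv.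
have [w0 Hw0] := nod_mid a Hk.
rewrite ssrc_nod Hw0 in Hb.
have := nod_inr Hb; rewrite (nod_inr Hw0) => -[H1 H2].
rewrite stgt_nod -H1 -H2 in Hv.
case/andP: Hk => Hk0 HkA.
have HAk : (A - k = (A - k.+1).+1)%N by rewrite subnS prednK // subn_gt0.
rewrite HAk /=.
case: (ltngtP k.+1 A) => [Hk1 | Hk1 | Hk1].
  have [IH1 IH2] := IH k.+1 (Hk1) Hv.
  split; first by rewrite IH1 /fb -H1 -H2.
  by move=> Hs; rewrite stgt_nod -H1 -H2 IH2 ?addSnnS.
  by rewrite ltnS leqNgt HkA in Hk1.
have H0 : (A - k.+1 = 0)%N by rewrite -Hk1 subnn.
by rewrite H0 take0 /fb -H1 -H2.
Qed.

End Str.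

Section W.
Variables (K : fieldType) (V Arr : eqType) (src tgt : Arr -> V) (A : nat) (w : newv Arr A).
Local Notation S := (svert V Arr A).
Local Notation B := (sarr Arr A).
Local Notation ss := (@ssrc V Arr src A).
Local Notation sg := (@stgt V Arr tgt A).
Local Notation vf := (validf ss sg).
Local Notation ef := (endf sg).
Local Notation α := (val w).1.
Local Notation i := (val w).2.
Local Notation pt := (ptilde src w).
Local Notation qt := (qtilde V w).
Local Notation fb := (@fb Arr A).
Local Notation js1 := [seq j <- enum 'I_A | (nat_of_ord j < i)%N].
Local Notation js2 := [seq j <- enum 'I_A | (i <= nat_of_ord j)%N].

Lemma Hi : (0 < i < A)%N.
Proof. exact: valP w. Qed.

Lemma js1_val : map val js1 = iota 0 i.
Proof.
have := filter_map val (fun n => n < i)%N (enum 'I_A).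
rewrite val_enum_ord => <-.
have := filter_iota_ltn 0 (ltnW (proj2 (andP Hi))); rewrite add0n => <-.
by [].
Qed.

Lemma js2_val : map val js2 = iota i (A - i).
Proof.
have := filter_map val (fun n => i <= n)%N (enum 'I_A).
rewrite val_enum_ord => <-.
have -> : iota 0 A = iota 0 i ++ iota i (A - i).
  by have := iotaD 0 i (A - i); rewrite add0n subnKC // ltnW //; case/andP: Hi.
rewrite filter_cat.
have -> : [seq x <- iota 0 i | (i <= x)%N] = [::].
  rewrite (@eq_in_filter _ _ pred0) ?filter_pred0 // => x.
  by rewrite mem_iota add0n => /andP[_ H]; rewrite /= leqNgt H.
rewrite (@eq_in_filter _ _ predT) ?filter_predT // => x.
by rewrite mem_iota => /andP[].
Qed.

Lemma size_js1 : size js1 = i.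
Proof. by rewrite -(size_map val) js1_val size_iota. Qed.

Lemma size_js2 : size js2 = (A - i)%N.
Proof. by rewrite -(size_map val) js2_val size_iota. Qed.

Lemma fb_pt : map fb pt.2 = [seq (α, j) | j <- iota 0 i].
Proof. by rewrite /ptilde /= -js1_val -!map_comp. Qed.

Lemma fb_qt : map fb qt.2 = [seq (α, j) | j <- iota i (A - i)].
Proof. by rewrite /qtilde /= -js2_val -!map_comp. Qed.

Lemma size_pt : size pt.2 = i.
Proof. by rewrite /ptilde /= size_map size_js1. Qed.

Lemma size_qt : size qt.2 = (A - i)%N.
Proof. by rewrite /qtilde /= size_map size_js2. Qed.

Lemma pt_valid : vf (inl (src α)) pt.2 && (ef (inl (src α)) pt.2 == inr w).
Proof.
have := @fwd_valid V Arr src tgt A α js1 0; rewrite size_js1 js1_val (@nod0 _ _ src tgt A) add0n (@nod_val _ _ src tgt A).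
by apply.
Qed.

Lemma qt_valid : vf (inr w) qt.2 && (ef (inr w) qt.2 == inl (tgt α)).
Proof.
have := @fwd_valid V Arr src tgt A α js2 i; rewrite size_js2 js2_val (@nod_val _ _ src tgt A) subnKC ?(@nodA _ _ src tgt A).
- by apply.
- by case/andP: Hi => H1 H2; apply: leq_trans H2.
- by case/andP: Hi => _ /ltnW.
Qed.

Lemma pt_start s : vf s pt.2 -> s = inl (src α).
Proof.
move=> H; rewrite -(@nod0 _ _ src tgt A); apply: (@fwd_start V Arr src tgt A α js1 0 s) => //.
  by rewrite js1_val size_js1.
by rewrite -size_eq0 size_js1 -lt0n; case/andP: Hi.
Qed.


Definition P1 (Z : qpath S B) : bool :=
  pvalid ss sg Z && (pend sg Z == inr w) && (i <= size Z.2)%N.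
Definition st1 (Z : qpath S B) : qpath S B := (Z.1, take (size Z.2 - i) Z.2).
Definition R1 (y : elm K S B) : elm K S B := [seq (e.1, st1 e.2) | e <- y & P1 e.2].

Lemma char1 Z q : P1 Z && ((st1 Z == q) && pvalid ss sg (st1 Z)) =
  (Z == pcat q pt) && pvalid ss sg Z.
Proof.
apply/idP/idP.
  case: Z => s l; rewrite /P1 /st1 /pvalid /pend /=.
  move=> /andP[/andP[/andP[Hv He] Hs] /andP[/eqP Hq Hvq]].
  rewrite -(@nod_val _ _ src tgt A) in He.
  have [B1 _] := @back V Arr src tgt A α l i s (proj2 (andP Hi)) Hv (eqP He).
  have Hd : drop (size l - i) l = pt.2.
    by apply: (inj_map (@fb_inj Arr A)); rewrite B1 // fb_pt.
  by rewrite Hv andbT -Hq /pcat -Hd cat_take_drop.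
move=> /andP[/eqP -> Hv].
move: Hv; rewrite /pvalid /pcat /= validf_cat => /andP[Hq Hp].
have Hs := pt_start Hp.
rewrite /P1 /st1 /pvalid /pend /= validf_cat Hq Hp endf_cat Hs.
rewrite (eqP (proj2 (andP pt_valid))) eqxx size_cat size_pt leq_addl.
by rewrite addnK take_size_cat // -surjective_pairing eqxx.
Qed.

Lemma coef_R1 y q : coef ss sg (R1 y) q = coef ss sg y (pcat q pt).
Proof.
rewrite /coef /R1 big_map big_filter_cond /=; apply: eq_bigl => e /=.
exact: char1.
Qed.


Lemma xv1 (x : elm K S B) :
  eqe ss sg (mule ss sg x (vtx K B (inl (src α)))) (R1 (mule ss sg x (pel K pt))).
Proof.
move=> q; rewrite coef_R1 /vtx !mulpel_eq /coef !big_map !big_filter_cond.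
apply: eq_bigl => -[c [s l]] /=.
have Hpt : pvalid ss sg pt by case/andP: pt_valid.
case: q => s' l'; rewrite /composable Hpt /=.
case Hc: (pvalid ss sg (s, l) && (pend sg (s, l) == inl (src α))) => //=.
have Hv : pvalid ss sg (pcat (s, l) pt).
  by apply: (proj1 (@pcat_valid _ _ ss sg _ _ _)); rewrite /composable Hpt /=; exact: Hc.
rewrite Hv /pcat /= cats0 !xpair_eqE eq_catr.
by case/andP: Hc => -> _; rewrite !andbT.
Qed.


Lemma split1 Z : P1 Z -> Z = pcat (st1 Z) pt.
Proof.
case: Z => s l; rewrite /P1 /st1 /pvalid /pend /= => /andP[/andP[Hv He] Hs].
rewrite -(@nod_val _ _ src tgt A) in He.
have [B1 _] := @back V Arr src tgt A α l i s (proj2 (andP Hi)) Hv (eqP He).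
have Hd : drop (size l - i) l = pt.2.
  by apply: (inj_map (@fb_inj Arr A)); rewrite B1 // fb_pt.
by rewrite /pcat -Hd cat_take_drop.
Qed.

Lemma R1_mapfilter c (G : elm K S B) (cnd : pred (K * qpath S B)) (H : K * qpath S B -> K * qpath S B) :
  R1 (scale c [seq H f | f <- G & cnd f]) =
  [seq (c * (H f).1, st1 (H f).2) | f <- G & cnd f && P1 (H f).2].
Proof.
rewrite /R1 /scale; elim: G => //= f G IH.
by case: (cnd f) => //=; case: (P1 _) => /=; rewrite IH.
Qed.

Lemma scale_mapfilter c (G : elm K S B) (cnd : pred (K * qpath S B)) (H : K * qpath S B -> K * qpath S B) :
  scale c [seq H f | f <- G & cnd f] =
  [seq (c * (H f).1, (H f).2) | f <- G & cnd f].
Proof. by rewrite /scale; elim: G => //= f G IH; case: (cnd f) => //=; rewrite IH. Qed.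

Lemma R1_term c u (G : elm K S B) w2 :
  (forall f, f \in G -> exists v0, ef f.2.1 f.2.2 = inl v0) ->
  R1 (scale c (mule ss sg (mule ss sg (pel K u) G) (pel K w2))) =
  if P1 w2 then scale c (mule ss sg (mule ss sg (pel K u) G) (pel K (st1 w2))) else [::].
Proof.
move=> HG; rewrite !term_eq R1_mapfilter.
case HP: (P1 w2).
  rewrite scale_mapfilter.
  have Hw2 := split1 HP.
  have Hv3 : pvalid ss sg (st1 w2).
    move: HP; rewrite /P1 => /andP[/andP[Hv _] _]; move: Hv.
    by rewrite {1}Hw2 /pvalid /pcat /= validf_cat => /andP[].
  have Hv2 : pvalid ss sg w2 by move: HP; rewrite /P1 => /andP[/andP[]].
  have Hcnd : forall f, (composable ss sg u f.2 && composable ss sg (pcat u f.2) w2) =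
      (composable ss sg u f.2 && composable ss sg (pcat u f.2) (st1 w2)).
    by move=> f; rewrite /composable Hv2 Hv3.
  rewrite (@eq_in_filter _ _ (fun f => composable ss sg u f.2 && composable ss sg (pcat u f.2) (st1 w2))); last first.
    move=> f _; rewrite -Hcnd.
    case Hc: (composable ss sg u f.2 && composable ss sg (pcat u f.2) w2) => //=.
    case/andP: Hc => _ Hc.
    have [Hv He] := @pcat_valid _ _ ss sg _ _ Hc.
    move: HP; rewrite /P1 Hv He /= size_cat => /andP[/andP[_ ->]] /= Hs.
    exact: leq_trans Hs (leq_addl _ _).
  apply/eq_in_map => f; rewrite mem_filter => /andP[_ _] /=.
  congr (_, _); move: HP; rewrite /P1 /st1 /pcat /= => /andP[_ Hs].
  by rewrite size_cat -addnBA // take_cat ltnNge leq_addr /= addKn.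
rewrite (@eq_in_filter _ _ pred0) ?filter_pred0 // => f Hf /=.
apply/negbTE/negP; case/andP => /andP[Hc1 Hc2] HP'.
have [Hv He] := @pcat_valid _ _ ss sg _ _ Hc2.
move: HP'; rewrite /P1 Hv He /= => /andP[He2 Hs].
have [_ He1] := @pcat_valid _ _ ss sg _ _ Hc1.
case/and3P: Hc2 => _ Hv2 /eqP Hs2.
rewrite /P1 Hv2 He2 /= in HP.
clear Hv He Hs; move: Hv2 He2 Hs2 HP; case: w2 => s2 l2; rewrite /pvalid /pend /= => Hv2 He2 Hs2 HP.
rewrite -(@nod_val _ _ src tgt A) in He2.
have [_ B2] := @back V Arr src tgt A α l2 i s2 (proj2 (andP Hi)) Hv2 (eqP He2).
have Hlt : (size l2 < i)%N by rewrite ltnNge HP.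
have Hmid : (0 < i - size l2 < A)%N.
  rewrite subn_gt0 Hlt /=; apply: leq_ltn_trans (leq_subr _ _) _; by case/andP: Hi.
have [w0 Hw0] := @nod_mid V Arr src tgt A α (i - size l2)%N Hmid.
have [v0 Hv0] := HG f Hf.
move: He1 Hs2; rewrite /pend /pcat /= => ->; rewrite Hv0 B2 // Hw0.
by [].
Qed.


Local Notation v' := (inl (tgt α) : S).

Definition P2 (Z : qpath S B) : bool :=
  pvalid ss sg Z && (Z.1 == inr w) && (A - i <= size Z.2)%N.
Definition st2 (Z : qpath S B) : qpath S B := (v', drop (A - i) Z.2).
Definition R2 (y : elm K S B) : elm K S B := [seq (e.1, st2 e.2) | e <- y & P2 e.2].

Lemma split2 Z : P2 Z -> Z = pcat qt (st2 Z).
Proof.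
case: Z => s l; rewrite /P2 /st2 /pvalid /= => /andP[/andP[Hv /eqP Hs] Hl].
rewrite Hs -(@nod_val _ _ src tgt A) in Hv.
have [F1 _] := @fwd V Arr src tgt A α l i Hi Hv.
rewrite size_takel // in F1.
have Hd : take (A - i) l = qt.2.
  by apply: (inj_map (@fb_inj Arr A)); rewrite F1 fb_qt.
by rewrite /pcat -Hd cat_take_drop Hs.
Qed.

Lemma char2 Z q : P2 Z && ((st2 Z == q) && pvalid ss sg (st2 Z)) =
  (q.1 == v') && (Z == pcat qt q) && pvalid ss sg Z.
Proof.
apply/idP/idP.
  move=> /andP[HP /andP[/eqP Hq Hvq]].
  have Hz := split2 HP.
  rewrite -Hq eqxx /= {1}Hz eqxx /=.
  by case/andP: HP => /andP[].
move=> /andP[/andP[/eqP Hq /eqP ->] Hv].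
move: Hv; rewrite /pvalid /pcat /= validf_cat => /andP[Hq1 Hp].
rewrite (eqP (proj2 (andP qt_valid))) in Hp.
rewrite /P2 /st2 /pvalid /= validf_cat Hq1 (eqP (proj2 (andP qt_valid))) Hp eqxx /=.
rewrite size_cat size_qt leq_addr drop_size_cat ?size_qt //= -Hq -surjective_pairing eqxx /=.
by rewrite Hq.
Qed.

Lemma coef_R2 y q : coef ss sg (R2 y) q =
  if q.1 == v' then coef ss sg y (pcat qt q) else 0.
Proof.
rewrite /coef /R2 big_map big_filter_cond /=; case: ifP => Hq.
  by apply: eq_bigl => e /=; rewrite char2 Hq.
by rewrite big_pred0 // => e /=; rewrite char2 Hq.
Qed.

Lemma xv2 (x : elm K S B) :
  eqe ss sg (mule ss sg (vtx K B v') x) (R2 (mule ss sg (pel K qt) x)).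
Proof.
move=> q; rewrite coef_R2 /vtx !pelmul_eq /coef !big_map !big_filter_cond.
have Hqt : pvalid ss sg qt by case/andP: qt_valid.
have Hqe : pend sg qt = v' by apply/eqP; case/andP: qt_valid.
case: q => s' l' /=; case: ifP => Hq.
  apply: eq_bigl => -[c [s l]] /=.
  have Hv' : forall l, pvalid ss sg (v', l) -> pvalid ss sg (pcat qt (v', l)).
    by move=> l0 Hv; apply: (proj1 (@pcat_valid _ _ ss sg _ _ _)); rewrite /composable Hqt Hv Hqe eqxx.
  move: (qtilde V w) Hqt Hqe Hv' => Q Hqt Hqe Hv'.
  rewrite /composable Hqt Hqe /=.
  case Hc: (pvalid ss sg (s, l) && (v' == s)) => //=.
  case/andP: Hc => Hv /eqP Hs; subst s.
  rewrite (Hv' l Hv) /pcat /= !xpair_eqE eqseq_cat // eqxx /= andbT.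
  by rewrite eq_sym Hq Hv eqxx andbT.
rewrite big_pred0 // => -[c [s l]] /=.
by rewrite /pcat /= xpair_eqE eq_sym Hq andbF.
Qed.


Lemma R2_mapfilter c (G : elm K S B) (cnd : pred (K * qpath S B)) (H : K * qpath S B -> K * qpath S B) :
  R2 (scale c [seq H f | f <- G & cnd f]) =
  [seq (c * (H f).1, st2 (H f).2) | f <- G & cnd f && P2 (H f).2].
Proof.
rewrite /R2 /scale; elim: G => //= f G IH.
by case: (cnd f) => //=; case: (P2 _) => /=; rewrite IH.
Qed.

Lemma pcat_same (u u' p : qpath S B) : pvalid ss sg u = pvalid ss sg u' -> pend sg u = pend sg u' ->
  pvalid ss sg (pcat u p) = pvalid ss sg (pcat u' p) /\ pend sg (pcat u p) = pend sg (pcat u' p).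
Proof.
rewrite /pvalid /pend /pcat /= !validf_cat !endf_cat => -> ->; by [].
Qed.

Lemma R2_term c u (G : elm K S B) w2 :
  (forall f, f \in G -> exists s0, f.2.1 = inl s0) ->
  R2 (scale c (mule ss sg (mule ss sg (pel K u) G) (pel K w2))) =
  if P2 u then scale c (mule ss sg (mule ss sg (pel K (st2 u)) G) (pel K w2)) else [::].
Proof.
move=> HG; rewrite !term_eq R2_mapfilter.
case HP: (P2 u).
  rewrite scale_mapfilter.
  have Hu2 : u.2 = qt.2 ++ (st2 u).2 by rewrite {1}(split2 HP).
  have Hvu : pvalid ss sg u by move: HP; rewrite /P2 => /andP[/andP[]].
  have Hu1 : u.1 = inr w by move: HP; rewrite /P2 => /andP[/andP[_ /eqP]].
  have [Hv3 He3] : pvalid ss sg (st2 u) /\ pend sg (st2 u) = pend sg u.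
    move: Hvu; rewrite /pvalid /pend Hu2 Hu1 validf_cat endf_cat.
    by rewrite (eqP (proj2 (andP qt_valid))) => /andP[_ ->].
  rewrite (@eq_in_filter _ _ (fun f => composable ss sg (st2 u) f.2 &&
       composable ss sg (pcat (st2 u) f.2) w2)); last first.
    move=> f _.
    have Hvv : pvalid ss sg u = pvalid ss sg (st2 u) by rewrite Hvu Hv3.
    have [Hs1 Hs2] := @pcat_same u (st2 u) f.2 Hvv (esym He3).
    rewrite /composable Hs1 Hs2 Hvu Hv3 He3.
    case Hc: [&& true, pvalid ss sg f.2 & _] => //=.
    case Hc2: [&& _, pvalid ss sg w2 & _] => //=.
    have [Hv He] : pvalid ss sg (pcat (pcat u f.2) w2) /\ pend sg (pcat (pcat u f.2) w2) = pend sg w2.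
      by apply: pcat_valid; rewrite /composable Hs1 Hs2.
    rewrite /P2 Hv /= Hu1 eqxx /= !size_cat.
    case/andP: HP => _ Hs; apply: leq_trans Hs _; rewrite -addnA; exact: leq_addr.
  apply/eq_in_map => f _ /=; congr (_, _).
  rewrite /st2 /pcat /=.
  set u' := st2 u in Hu2 *.
  by rewrite Hu2 -!catA !drop_size_cat //; exact: size_qt.
rewrite (@eq_in_filter _ _ pred0) ?filter_pred0 // => f Hf /=.
apply/negbTE/negP; case/andP => /andP[Hc1 Hc2] HP'.
case/and3P: Hc1 => Hvu _ /eqP Hpu.
have [s0 Hs0] := HG f Hf.
move: HP'; rewrite /P2 /= => /andP[/andP[_ Hu1] Hs].
rewrite /P2 Hvu Hu1 /= in HP.
have Hlt : (size u.2 < A - i)%N by rewrite ltnNge HP.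
move: Hvu Hu1 Hpu Hlt; case: (u) => s l; rewrite /pvalid /pend /= => Hvu /eqP Hu1 Hpu Hlt.
rewrite Hu1 -(@nod_val _ _ src tgt A) in Hvu Hpu.
have [_ F2] := @fwd V Arr src tgt A α l i Hi Hvu.
have Hmid : (0 < i + size l < A)%N.
  rewrite addn_gt0; case/andP: Hi => -> HiA /=; by rewrite -ltn_subRL.
have [w0 Hw0] := @nod_mid V Arr src tgt A α _ Hmid.
by move: Hpu; rewrite F2 // Hw0 Hs0.
Qed.

End W.

Lemma R1_flatten (K : fieldType) (V Arr : eqType) (src tgt : Arr -> V) (A : nat) (w : newv Arr A)
  (L : seq (elm K (svert V Arr A) (sarr Arr A))) :
  R1 src tgt w (flatten L) = flatten [seq R1 src tgt w y | y <- L].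
Proof. by elim: L => //= y L IH; rewrite /R1 filter_cat map_cat -IH. Qed.

Lemma R2_flatten (K : fieldType) (V Arr : eqType) (src tgt : Arr -> V) (A : nat) (w : newv Arr A)
  (L : seq (elm K (svert V Arr A) (sarr Arr A))) :
  R2 src tgt w (flatten L) = flatten [seq R2 src tgt w y | y <- L].
Proof. by elim: L => //= y L IH; rewrite /R2 filter_cat map_cat -IH. Qed.

Lemma nth_theta (K : fieldType) (V Arr : eqType) (src tgt : Arr -> V) (A : nat)
  (gs : seq (elm K V Arr)) n f : (0 < A)%N ->
  f \in nth [::] [seq theta A g | g <- gs] n ->
  (exists s0, f.2.1 = inl s0) /\ (exists v0, endf (@stgt V Arr tgt A) f.2.1 f.2.2 = inl v0).
Proof.
move=> HA; case: (ltnP n (size gs)) => Hn; last by rewrite nth_default ?size_map.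
rewrite (nth_map [::]) // /theta => /mapP [e _ ->] /=.
split; first by eexists.
exact: (@theta_end V Arr src tgt A).
Qed.

Lemma eqe_nil_scale0 (K : fieldType) (V Arr : eqType) (src tgt : Arr -> V) (y : elm K V Arr) :
  eqe src tgt [::] (scale 0 y).
Proof. by move=> p; rewrite coef_nil coef_scale0. Qed.

Theorem proposition1p10 (K : fieldType) (V Arr : finType) (src tgt : Arr -> V)
  (gs : seq (elm K V Arr)) (A : nat) :
  admissible src tgt gs ->
  (forall g, g \in gs -> uniform src tgt g) ->
  minimal_gens src tgt gs ->
  (0 < A)%N ->
  forall (w : newv Arr A) (x : elm K (svert V Arr A) (sarr Arr A)),
  let s_src := @ssrc V Arr src A in
  let s_tgt := @stgt V Arr tgt A in
  let sgs := [seq theta A g | g <- gs] in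
  let v := inl (src (val w).1) : svert V Arr A in
  let v' := inl (tgt (val w).1) : svert V Arr A in
  (~ in_ideal s_src s_tgt sgs (mule s_src s_tgt x (vtx K (sarr Arr A) v)) ->
   ~ in_ideal s_src s_tgt sgs (mule s_src s_tgt x (pel K (ptilde src w)))) /\
  (~ in_ideal s_src s_tgt sgs (mule s_src s_tgt (vtx K (sarr Arr A) v') x) ->
   ~ in_ideal s_src s_tgt sgs (mule s_src s_tgt (pel K (qtilde V w)) x)).
Proof.
move=> _ _ _ HA w x; cbv zeta.
set sgs := [seq theta A g | g <- gs].
set t0 := (0 : K, ptilde src w, 0%N, ptilde src w).
split.
  move=> Hn [r Hr]; apply: Hn.
  exists [seq (if P1 src tgt w t.2 then (t.1.1.1, t.1.1.2, t.1.2, st1 w t.2)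
               else (0, t.1.1.2, t.1.2, t.2)) | t <- r].
  apply: eqe_trans (xv1 src tgt w x) _.
  move=> q; rewrite coef_R1 Hr -coef_R1 R1_flatten.
  apply: eqe_flatten; first by rewrite !size_map.
  move=> k; rewrite !size_map => Hk.
  rewrite (nth_map [::]) ?size_map // (nth_map t0) // -map_comp (nth_map t0) //=.
  rewrite R1_term; last by move=> f Hf; case: (nth_theta src tgt HA Hf).
  by case: ifP => _ //; apply: eqe_nil_scale0.
move=> Hn [r Hr]; apply: Hn.
exists [seq (if P2 src tgt w t.1.1.2 then (t.1.1.1, st2 tgt w t.1.1.2, t.1.2, t.2)
             else (0, t.1.1.2, t.1.2, t.2)) | t <- r].
apply: eqe_trans (xv2 src tgt w x) _.
move=> q; rewrite coef_R2 Hr -coef_R2 R2_flatten.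
apply: eqe_flatten; first by rewrite !size_map.
move=> k; rewrite !size_map => Hk.
rewrite (nth_map [::]) ?size_map // (nth_map t0) // -map_comp (nth_map t0) //=.
rewrite R2_term; last by move=> f Hf; case: (nth_theta src tgt HA Hf).
by case: ifP => _ //; apply: eqe_nil_scale0.
Qed.
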